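(* For every base $\mathcal{B}$, atomic multiset $L$, nonempty finite multiset $\Gamma$ of ILL formulae and ILL formula $\varphi$: $\Gamma\Vdash^L_{\mathcal{B}}\varphi$ if and only if for every base $\mathcal{C}\supseteq\mathcal{B}$ and every atomic multiset $K$, $\Vdash^K_{\mathcal{C}}\Gamma$ implies $\Vdash^{L,K}_{\mathcal{C}}\varphi$.
   Context: Fix a set $\mathbb{A}$ of propositional atoms. ILL formulae: $\phi ::= p\in\mathbb{A} \mid \top \mid 0 \mid 1 \mid \phi\multimap\phi \mid \phi\otimes\phi \mid \phi\,\&\,\phi \mid \phi\oplus\phi \mid\ !\phi$. All multisets are finite; ''$\Gamma,\Delta$'' denotes multiset union. Atomic rules and bases: an atomic sequent is $P\Rightarrow p$ with $P$ a multiset of atoms, $p$ an atom. An atomic box is a multiset of atomic sequents. An atomic rule is a triple $\langle\mathbf{A},\mathbf{S},p\rangle$ with $\mathbf{A}$ a multiset of atomic boxes, $\mathbf{S}$ an atomic box, $p$ an atom. A base is a set of atomic rules. An atom $p$ is persistent in $\mathcal{B}$ if some $\langle\varnothing,\mathbf{S},p\rangle\in\mathcal{B}$ has $\mathbf{S}\neq\varnothing$. Derivability $\vdash_{\mathcal{B}}$: (Ref) $p\vdash_{\mathcal{B}}p$; (App) if $\langle\mathbf{A},\mathbf{S},p\rangle\in\mathcal{B}$ with $\mathbf{A}=\{\mathbf{T}_1,\dots,\mathbf{T}_m\}$, and there are atomic multisets $C_1,\dots,C_n$ ($n\ge m$) and a multiset $D=\{d_{m+1},\dots,d_n\}$ of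 atoms persistent in $\mathcal{B}$ such that $C_i,Q\vdash_{\mathcal{B}}q$ for every $i\le m$ and every $Q\Rightarrow q\in\mathbf{T}_i$, $C_j\vdash_{\mathcal{B}}d_j$ for every $m<j\le n$, and $D,U\vdash_{\mathcal{B}}v$ for every $U\Rightarrow v\in\mathbf{S}$, then $C_1,\dots,C_n\vdash_{\mathcal{B}}p$. Support $\Vdash^L_{\mathcal{B}}$ (base $\mathcal{B}$, atomic multiset $L$), by induction on formulae: $\Vdash^L_{\mathcal{B}}p$ iff $L\vdash_{\mathcal{B}}p$; $\Vdash^L_{\mathcal{B}}\varphi\multimap\psi$ iff $\varphi\Vdash^L_{\mathcal{B}}\psi$; $\Vdash^L_{\mathcal{B}}\varphi\otimes\psi$ iff for all $\mathcal{C}\supseteq\mathcal{B}$, atomic $K$, atoms $p$: if $\varphi,\psi\Vdash^K_{\mathcal{C}}p$ then $\Vdash^{L,K}_{\mathcal{C}}p$; $\Vdash^L_{\mathcal{B}}1$ iff for all $\mathcal{C}\supseteq\mathcal{B}$, $K$, $p$: if $\Vdash^K_{\mathcal{C}}p$ then $\Vdash^{L,K}_{\mathcal{C}}p$; $\Vdash^L_{\mathcal{B}}\varphi\&\psi$ iff $\Vdash^L_{\mathcal{B}}\varphi$ and $\Vdash^L_{\mathcal{B}}\psi$; $\Vdash^L_{\mathcal{B}}\varphi\oplus\psi$ iff for all $\mathcal{C}\supseteq\mathcal{B}$, $K$, $p$: if $\varphi\Vdash^K_{\mathcal{C}}p$ and $\psi\Vdash^K_{\mathcal{C}}p$ then $\Vdash^{L,K}_{\mathcal{C}}p$;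 $\Vdash^L_{\mathcal{B}}0$ iff $\Vdash^{L,K}_{\mathcal{B}}p$ for all atoms $p$ and atomic $K$; $\Vdash^L_{\mathcal{B}}\top$ always; $\Vdash^L_{\mathcal{B}}!\varphi$ iff for all $\mathcal{C}\supseteq\mathcal{B}$, $K$, $p$: if (for all $\mathcal{D}\supseteq\mathcal{C}$, $\Vdash^{\varnothing}_{\mathcal{D}}\varphi$ implies $\Vdash^K_{\mathcal{D}}p$) then $\Vdash^{L,K}_{\mathcal{C}}p$. For nonempty multisets: $\Vdash^L_{\mathcal{B}}\Gamma,\Delta$ iff $L=K,M$ with $\Vdash^K_{\mathcal{B}}\Gamma$ and $\Vdash^M_{\mathcal{B}}\Delta$. For a nonempty antecedent written $!\Delta,\Theta$, where $!\Delta$ collects the formulae with top-level connective $!$ (with $\Delta$ the formulae under those $!$) and $\Theta$ contains none: $!\Delta,\Theta\Vdash^L_{\mathcal{B}}\varphi$ iff for all $\mathcal{C}\supseteq\mathcal{B}$ and atomic $K$, if $\Vdash^{\varnothing}_{\mathcal{C}}\delta$ for every $\delta\in\Delta$ and $\Vdash^K_{\mathcal{C}}\Theta$ then $\Vdash^{L,K}_{\mathcal{C}}\varphi$ (when $\Theta$ is empty, $K$ is empty). An empty antecedent: $\varnothing\Vdash^L_{\mathcal{B}}\varphi$ means $\Vdash^L_{\mathcal{B}}\varphi$. *)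

(* Defs.v *)
(* atoms are an arbitrary type A; finite multisets are lists,
   taken up to permutation (Permutation) wherever multiset equality matters. *)
From Stdlib Require Import List Permutation.
Import ListNotations.
Set Implicit Arguments.

Section ILL.
Variable A : Type.

Inductive formula : Type :=
| Atom : A -> formula
| Top : formula
| Zero : formula
| One : formula
| Lolli : formula -> formula -> formula
| Tensor : formula -> formula -> formula
| With : formula -> formula -> formula
| Plus : formula -> formula -> formula
| Bang : formula -> formula.

Definition asequent : Type := (list A * A)%type.
Definition abox : Type := list asequent.

Record arule : Type := ARule {
  r_prem : list abox;
  r_box  : abox;
  r_head : A
}.

Definition base : Type := arule -> Prop.

Definition base_ext (C B : base) : Prop := forall r, B r -> C r.

Definition persistent (B : base) (p : A) : Prop :=
  exists S, B (ARule [] S p) /\ S <> [].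

Inductive derives (B : base) : list A -> A -> Prop :=
| der_ref : forall p, derives B [p] p
| der_app : forall (As : list abox) (S : abox) (p : A)
    (Cs1 Cs2 : list (list A)) (Ds : list A) (L : list A),
    B (ARule As S p) ->
    Forall2 (fun (Ci : list A) (Ti : abox) =>
               forall Q q, In (Q, q) Ti -> derives B (Ci ++ Q) q) Cs1 As ->
    Forall2 (fun (Cj : list A) (dj : A) => derives B Cj dj) Cs2 Ds ->
    Forall (persistent B) Ds ->
    (forall U v, In (U, v) S -> derives B (Ds ++ U) v) ->
    Permutation L (concat Cs1 ++ concat Cs2) ->
    derives B L p.

Fixpoint supp (B : base) (L : list A) (phi : formula) {struct phi} : Prop :=
  match phi with
  | Atom p => derives B L p
  | Lolli f g =>
      (* f ||-^L_B g, with the antecedent clause for a single formula *)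
      match f with
      | Bang d =>
          forall C : base, base_ext C B -> supp C [] d -> supp C L g
      | _ =>
          forall C : base, base_ext C B -> forall K,
            supp C K f -> supp C (L ++ K) g
      end
  | Tensor f g =>
      forall C : base, base_ext C B -> forall K p,
        (* f, g ||-^K_C p, with the antecedent clause for the multiset {f,g} *)
        (match f, g with
         | Bang d1, Bang d2 =>
             forall D : base, base_ext D C ->
               supp D [] d1 -> supp D [] d2 -> derives D K p
         | Bang d1, _ =>
             forall D : base, base_ext D C -> forall M,
               supp D [] d1 -> supp D M g -> derives D (K ++ M) p
         | _, Bang d2 =>
             forall D : base, base_ext D C -> forall M,
               supp D [] d2 -> supp D M f -> derives D (K ++ M) p
         | _, _ =>
             forall D : base, base_ext D C -> forall M,
               (exists M1 M2, Permutation M (M1 ++ M2) /\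
                  supp D M1 f /\ supp D M2 g) ->
               derives D (K ++ M) p
         end) ->
        derives C (L ++ K) p
  | One =>
      forall C : base, base_ext C B -> forall K p,
        derives C K p -> derives C (L ++ K) p
  | With f g => supp B L f /\ supp B L g
  | Plus f g =>
      forall C : base, base_ext C B -> forall K p,
        (* f ||-^K_C p *)
        (match f with
         | Bang d => forall D : base, base_ext D C -> supp D [] d -> derives D K p
         | _ => forall D : base, base_ext D C -> forall M,
                  supp D M f -> derives D (K ++ M) p
         end) ->
        (* g ||-^K_C p *)
        (match g with
         | Bang d => forall D : base, base_ext D C -> supp D [] d -> derives D K p
         | _ => forall D : base, base_ext D C -> forall M,
                  supp D M g -> derives D (K ++ M) p
         end) ->
        derives C (L ++ K) p
  | Zero => forall p K, derives B (L ++ K) p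
  | Top => True
  | Bang f =>
      forall C : base, base_ext C B -> forall K p,
        (forall D : base, base_ext D C -> supp D [] f -> derives D K p) ->
        derives C (L ++ K) p
  end.

Fixpoint supp_ctx (B : base) (L : list A) (G : list formula) : Prop :=
  match G with
  | [] => L = []     (* only used for the empty Theta (then K is empty) *)
  | [f] => supp B L f
  | f :: G' => exists K M, Permutation L (K ++ M) /\ supp B K f /\ supp_ctx B M G'
  end.

Definition is_bang (f : formula) : bool :=
  match f with Bang _ => true | _ => false end.

Definition bang_part (G : list formula) : list formula :=
  flat_map (fun f => match f with Bang d => [d] | _ => [] end) G.

Definition nonbang_part (G : list formula) : list formula :=
  filter (fun f => negb (is_bang f)) G.

(* general antecedent support  !Delta, Theta ||-^L_B phi  (Gamma nonempty) *)
Definition supp_ante (B : base) (L : list A) (G : list formula) (phi : formula) : Prop :=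
  forall C : base, base_ext C B -> forall K,
    (forall d, In d (bang_part G) -> supp C [] d) ->
    supp_ctx C K (nonbang_part G) ->
    supp C (L ++ K) phi.

End ILL.

(* Main.v *)
Require Import Defs.
From Stdlib Require Import List Permutation.
Import ListNotations.

Section Aux.
Variable A : Type.

Lemma ext_trans {D C B : base A} : base_ext D C -> base_ext C B -> base_ext D B.
Proof. unfold base_ext; auto. Qed.

Lemma ext_refl (B : base A) : base_ext B B.
Proof. unfold base_ext; auto. Qed.

Hint Resolve ext_refl : core.

Fixpoint derives_mono (B C : base A) (H : base_ext C B) (L : list A) (p : A)
  (d : derives B L p) {struct d} : derives C L p.
Proof.
  destruct d as [p | As S p Cs1 Cs2 Ds L0 HB HF1 HF2 HP HS HPerm].
  - apply der_ref.
  - apply (@der_app A C As S p Cs1 Cs2 Ds L0 (H _ HB)).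
    + clear HB HF2 HP HS HPerm.
      induction HF1 as [|x y l l' hxy hrest IH]; constructor.
      * intros Q q Hin. exact (derives_mono B C H _ _ (hxy Q q Hin)).
      * exact IH.
    + clear HB HF1 HP HS HPerm.
      induction HF2 as [|x y l l' hxy hrest IH]; constructor.
      * exact (derives_mono B C H _ _ hxy).
      * exact IH.
    + clear HB HF1 HF2 HS HPerm.
      induction HP as [|x l hx hrest IH]; constructor.
      * destruct hx as [S0 [h1 h2]]. exists S0. split; [apply H; exact h1 | exact h2].
      * exact IH.
    + intros U v Hin. exact (derives_mono B C H _ _ (HS U v Hin)).
    + exact HPerm.
Defined.

Lemma derives_perm (B : base A) L L' p :
  derives B L p -> Permutation L L' -> derives B L' p.
Proof.
  intros d HP. destruct d as [p | As S p Cs1 Cs2 Ds L0 HB HF1 HF2 HP' HS HPerm].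
  - apply Permutation_length_1_inv in HP. subst. apply der_ref.
  - eapply der_app; eauto. eapply Permutation_trans; [apply Permutation_sym; exact HP|exact HPerm].
Qed.

Lemma supp_perm (phi : formula A) : forall B L L',
  supp B L phi -> Permutation L L' -> supp B L' phi.
Proof.
  induction phi; intros B L L' H HP; simpl in *.
  - eapply derives_perm; eauto.
  - auto.
  - intros; eapply derives_perm; [apply H; eauto | apply Permutation_app_tail; auto].
  - intros; eapply derives_perm; [apply H; eauto | apply Permutation_app_tail; auto].
  - destruct phi1; intros;
      try (eapply IHphi2; [eapply H; eauto| try apply Permutation_app_tail; auto]).
  - intros; eapply derives_perm; [apply H; eauto | apply Permutation_app_tail; auto].
  - destruct H; split; eauto.
  - intros; eapply derives_perm; [apply H; eauto | apply Permutation_app_tail; auto].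
  - intros; eapply derives_perm; [apply H; eauto | apply Permutation_app_tail; auto].
Qed.

Lemma supp_mono (phi : formula A) : forall B C L,
  base_ext C B -> supp B L phi -> supp C L phi.
Proof.
  induction phi; intros B C L HC H; simpl in *.
  - eapply derives_mono; eauto.
  - auto.
  - intros; eapply derives_mono; eauto.
  - intros; apply H; eauto using ext_trans.
  - destruct phi1; intros; apply H; eauto using ext_trans.
  - intros; apply H; eauto using ext_trans.
  - destruct H; split; eauto.
  - intros; apply H; eauto using ext_trans.
  - intros; apply H; eauto using ext_trans.
Qed.

Lemma bang_intro (C : base A) d : supp C [] d -> supp C [] (Bang d).
Proof.
  simpl. intros H C' HC' K p Hk. apply Hk; auto. eapply supp_mono; eauto.
Qed.

Lemma bang_elim (d : formula A) (phi : formula A) : forall C Ki K',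
  supp C Ki (Bang d) ->
  (forall D, base_ext D C -> supp D [] d -> supp D K' phi) ->
  supp C (Ki ++ K') phi.
Proof.
  induction phi; intros C Ki K' Hb Hk; simpl in Hb |- *.
  - apply Hb; auto.
  - auto.
  - intros p K0. rewrite <- app_assoc. apply Hb; auto.
    intros D HD Hd. apply (Hk D HD Hd).
  - intros C' HC' K0 p Hd. rewrite <- app_assoc.
    apply Hb; auto. intros D HD Hdd. apply (Hk D (ext_trans HD HC') Hdd); auto.
    eapply derives_mono; eauto.
  - destruct phi1; intros C' HC';
      [..| intros H0]; try (intros K0 H0; rewrite <- app_assoc);
      (apply IHphi2; [eapply supp_mono; [|exact Hb]; exact HC'|]);
      intros D HD Hdd; apply (Hk D (ext_trans HD HC') Hdd); auto;
      exact (supp_mono _ _ _ _ HD H0).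
  - intros C' HC' K0 p Hm. rewrite <- app_assoc.
    apply Hb; auto. intros D HD Hdd. apply (Hk D (ext_trans HD HC') Hdd); auto.
    destruct phi1, phi2; simpl in *; intros; apply Hm; eauto using ext_trans.
  - split; [apply IHphi1 | apply IHphi2]; auto; intros D HD Hdd; apply Hk; auto.
  - intros C' HC' K0 p Hm1 Hm2. rewrite <- app_assoc.
    apply Hb; auto. intros D HD Hdd. apply (Hk D (ext_trans HD HC') Hdd); auto.
    + destruct phi1; simpl in *; intros; apply Hm1; eauto using ext_trans.
    + destruct phi2; simpl in *; intros; apply Hm2; eauto using ext_trans.
  - intros C' HC' K0 p Hm. rewrite <- app_assoc.
    apply Hb; auto. intros D HD Hdd. apply (Hk D (ext_trans HD HC') Hdd); auto.
    intros; apply Hm; eauto using ext_trans.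
Qed.


Lemma ctx_cons (B : base A) K1 M f G :
  supp B K1 f -> supp_ctx B M G -> supp_ctx B (K1 ++ M) (f :: G).
Proof.
  intros H1 H2. destruct G as [|g G].
  - simpl in H2. subst. rewrite app_nil_r. exact H1.
  - exists K1, M. split; [apply Permutation_refl| split; assumption].
Qed.

Lemma ctx_uncons (B : base A) K f G :
  supp_ctx B K (f :: G) ->
  exists K1 M, Permutation K (K1 ++ M) /\ supp B K1 f /\ supp_ctx B M G.
Proof.
  intros H. destruct G as [|g G].
  - exists K, []. rewrite app_nil_r. split; [apply Permutation_refl|]. split; simpl; auto.
  - exact H.
Qed.

Lemma ctx_mono (G : list (formula A)) : forall (B C : base A) K,
  base_ext C B -> supp_ctx B K G -> supp_ctx C K G.
Proof.
  induction G as [|f G IH]; intros B C K HC H.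
  - exact H.
  - apply ctx_uncons in H. destruct H as [K1 [M [HP [H1 H2]]]].
    assert (supp_ctx C (K1 ++ M) (f :: G)).
    { apply ctx_cons. eapply supp_mono; eauto. eapply IH; eauto. }
    destruct G as [|g G].
    + simpl in H2. subst. rewrite app_nil_r in *. simpl in *.
      eapply supp_perm; [exact H|]. apply Permutation_sym; exact HP.
    + destruct H as [K2 [M2 [HP2 HH]]]. exists K2, M2. split; auto.
      eapply Permutation_trans; eauto.
Qed.

Lemma bang_cases (f : formula A) : (exists d, f = Bang d) \/ is_bang f = false.
Proof. destruct f; eauto. Qed.

Lemma parts_nb (f : formula A) G : is_bang f = false ->
  bang_part (f :: G) = bang_part G /\ nonbang_part (f :: G) = f :: nonbang_part G.
Proof.
  intros E. destruct f; try discriminate; unfold nonbang_part; simpl; rewrite ?E; simpl; auto.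
Qed.

Lemma fwd (G : list (formula A)) : forall L C K phi, supp_ctx C K G -> G <> [] ->
  (forall D, base_ext D C -> forall K', (forall d, In d (bang_part G) -> supp D [] d) ->
     supp_ctx D K' (nonbang_part G) -> supp D (L ++ K') phi) ->
  supp C (L ++ K) phi.
Proof.
  induction G as [|f G IH]; intros L C K phi Hc HG Hy; [congruence|].
  apply ctx_uncons in Hc. destruct Hc as [K1 [M [HP [H1 H2]]]].
  destruct (bang_cases f) as [[d ->]|E].
  - eapply supp_perm with (L := K1 ++ (L ++ M)).
    2:{ eapply Permutation_trans; [|apply Permutation_app_head; apply Permutation_sym; exact HP].
        rewrite !app_assoc. apply Permutation_app_tail. apply Permutation_app_comm. }
    apply (bang_elim d); [exact H1|]. intros D HD Hd.
    destruct G as [|g G].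
    + simpl in H2. subst. apply Hy; auto; [intros d0 Hin; simpl in Hin; destruct Hin as [<-|[]]; exact Hd | simpl; reflexivity].

    + apply IH; [eapply ctx_mono; eauto | discriminate |].
      intros D' HD' K' Hb Hn. apply Hy; [eapply ext_trans; eauto | |exact Hn].
      intros d0 Hin. simpl in Hin. destruct Hin as [<-|Hin].
      * eapply supp_mono; eauto.
      * apply Hb. exact Hin.
  - destruct (parts_nb f G E) as [Eb En].
    eapply supp_perm with (L := (L ++ K1) ++ M).
    2:{ rewrite <- app_assoc. apply Permutation_app_head. apply Permutation_sym; exact HP. }
    destruct G as [|g G].
    + simpl in H2. subst. rewrite app_nil_r. apply Hy; auto.
      * rewrite Eb. simpl. tauto.
      * rewrite En. exact H1.
    + apply IH; [exact H2 | discriminate |].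
      intros D HD K' Hb Hn. rewrite <- app_assoc. apply Hy; auto.
      * rewrite Eb. exact Hb.
      * rewrite En. apply ctx_cons; auto. eapply supp_mono; eauto.
Qed.

Lemma bwd (G : list (formula A)) : forall C K, G <> [] ->
  (forall d, In d (bang_part G) -> supp C [] d) ->
  supp_ctx C K (nonbang_part G) -> supp_ctx C K G.
Proof.
  induction G as [|f G IH]; intros C K HG Hb Hn; [congruence|].
  destruct (bang_cases f) as [[d ->]|E].
  - assert (Hd : supp C [] (Bang d)) by (apply bang_intro; apply Hb; simpl; auto).
    destruct G as [|g G].
    + simpl in Hn. subst. exact Hd.
    + change (supp_ctx C ([] ++ K) (Bang d :: g :: G)). apply ctx_cons; auto.
      apply IH; [discriminate| |exact Hn].
      intros d0 Hin. apply Hb. simpl. right. exact Hin.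
  - destruct (parts_nb f G E) as [Eb En]. rewrite En in Hn. rewrite Eb in Hb.
    apply ctx_uncons in Hn. destruct Hn as [K1 [M [HP [H1 H2]]]].
    destruct G as [|g G].
    + simpl in H2. subst. rewrite app_nil_r in HP. simpl.
      eapply supp_perm; [exact H1|]. apply Permutation_sym; exact HP.
    + exists K1, M. split; auto. split; auto. apply IH; auto; discriminate.
Qed.

End Aux.

Theorem theorem5 (A : Type) (B : base A) (L : list A) (G : list (formula A))
  (phi : formula A) :
  G <> [] ->
  (supp_ante B L G phi <->
   (forall C : base A, base_ext C B -> forall K : list A,
      supp_ctx C K G -> supp C (L ++ K) phi)).
Proof.
  intros HG. split.
  - intros H C HC K Hc. eapply fwd; eauto.
    intros D HD K' Hb Hn. apply H; auto. eapply ext_trans; eauto.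
  - intros H C HC K Hb Hn. apply H; auto. apply bwd; auto.
Qed.
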